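(* Let $0<\varepsilon\le 1$. Then every point of $i(0,\infty)=\{i s: s>0\}$ is an eigenvalue of $t$, and every point of $-i(0,\infty)=\{-is: s>0\}$ is an eigenvalue of $S_\varepsilon$. In particular, $t$ and $S_\varepsilon$ are unbounded operators.
   Context: Work in $L^2(\mathbb{R})$ with inner product $(f,g)=\int\overline{f(x)}g(x)\,dx$. Let $q$ be the self-adjoint multiplication operator $(qf)(x)=xf(x)$ on $D(q)=\{f\in L^2(\mathbb{R}): xf\in L^2(\mathbb{R})\}$ and $p=-i\,\frac{d}{dx}$ the self-adjoint momentum operator. Since $q$ is injective and self-adjoint, $q^{-1}$ is a (densely defined) self-adjoint operator. Define $t=q^{-1}p$ with domain $D(t)=\{f\in D(p): pf\in D(q^{-1})\}$. Let $L^2_0$ denote the subspace of even functions in $L^2(\mathbb{R})$. For $0<\varepsilon\le1$, define the operator $S_\varepsilon$ in $L^2_0$ by $D(S_\varepsilon)=\{f\in L^2_0\cap\bigcap_{n\ge0}D(t^{2n+1}) : \lim_{N\to\infty}\sum_{n=0}^N\frac{(-1)^n}{2n+1}(\sqrt{\varepsilon}\,t)^{2n+1}f \text{ exists in norm}\}$, $S_\varepsilon f=-\frac{1}{\sqrt\varepsilon}\sum_{n=0}^\infty\frac{(-1)^n}{2n+1}(\sqrt\varepsilon\,t)^{2n+1}f$ (formally $S_\varepsilon=-\varepsilon^{-1/2}\arctan(\sqrt\varepsilon\, t)$). *)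

(* Defs.v *)
From HB Require Import structures.
From mathcomp Require Import all_boot all_order all_algebra.
From mathcomp Require Import all_classical all_reals all_analysis.
From mathcomp Require Import complex.

Set Implicit Arguments.
Unset Strict Implicit.
Unset Printing Implicit Defensive.

Import Order.TTheory GRing.Theory Num.Theory.
Import numFieldNormedType.Exports.

Local Open Scope classical_set_scope.
Local Open Scope ring_scope.
Local Open Scope complex_scope.

(* Complex-valued functions on the real line: f : R -> R[i].
   Elements of L^2(R) are represented by functions; equality in L^2 is
   Lebesgue-a.e. equality. *)

Section L2defs.
Variable R : realType.
Local Notation mu := (@lebesgue_measure R).
Local Notation C := (R[i]).

Definition cnorm2 (z : C) : R := (complex.Re z) ^+ 2 + (complex.Im z) ^+ 2.

Definition cmeasurable (f : R -> C) : Prop :=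
  measurable_fun setT (fun x => complex.Re (f x)) /\ measurable_fun setT (fun x => complex.Im (f x)).

Definition l2norm2 (f : R -> C) : \bar R := (\int[mu]_x (cnorm2 (f x))%:E)%E.

Definition L2 (f : R -> C) : Prop := cmeasurable f /\ (l2norm2 f < +oo)%E.

Definition aeq (f g : R -> C) : Prop := {ae mu, forall x, f x = g x}.

Definition L2even (f : R -> C) : Prop := L2 f /\ aeq f (fun x => f (- x)).

Definition cprim (h : R -> C) (x : R) : C :=
  if (0 <= x)%R then
    (Rintegral mu `[0, x] (fun y => complex.Re (h y))) +i* (Rintegral mu `[0, x] (fun y => complex.Im (h y)))
  else
    - ((Rintegral mu `[x, 0] (fun y => complex.Re (h y))) +i* (Rintegral mu `[x, 0] (fun y => complex.Im (h y)))).

(* graph of the momentum operator p = -i d/dx on its self-adjoint domain H^1(R):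
   f \in D(p) and p f = g  iff  f, g \in L^2 and f is a.e. equal to an
   absolutely continuous function with derivative i g, i.e.
   f(x) = c + i \int_0^x g  for a.e. x. *)
Definition is_p (f g : R -> C) : Prop :=
  L2 f /\ L2 g /\ exists c : C, {ae mu, forall x, f x = c + 'i * cprim g x}.

(* graph of q^{-1}: g \in D(q^{-1}) = Ran q and q^{-1} g = h  iff
   g, h \in L^2 and g(x) = x h(x) a.e. *)
Definition is_qinv (g h : R -> C) : Prop :=
  L2 g /\ L2 h /\ {ae mu, forall x, g x = x%:C * h x}.

Definition is_t (f h : R -> C) : Prop := exists g, is_p f g /\ is_qinv g h.

Fixpoint is_tpow (n : nat) (f h : R -> C) : Prop :=
  match n with
  | 0%N => L2 f /\ aeq f h
  | n'.+1 => exists g, is_t f g /\ is_tpow n' g h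
  end.

Definition L2cvg (u : nat -> R -> C) (g : R -> C) : Prop :=
  (fun n => l2norm2 (fun x => u n x - g x)) @ \oo --> 0%E.

Definition Scoef (eps : R) (n : nat) : R :=
  (-1) ^+ n / (n.*2.+1)%:R * (Num.sqrt eps) ^+ (n.*2.+1).

Definition is_S (eps : R) (f h : R -> C) : Prop :=
  L2even f /\
  exists T : nat -> R -> C,
    (forall n, is_tpow n.*2.+1 f (T n)) /\
    exists g : R -> C,
      L2 g /\
      L2cvg (fun N x => \sum_(n < N.+1) (Scoef eps n)%:C * T n x) g /\
      aeq h (fun x => - ((Num.sqrt eps)^-1)%:C * g x).

Definition eigenvalue_t (lam : C) : Prop :=
  exists f, L2 f /\ ~ aeq f (fun=> 0) /\ is_t f (fun x => lam * f x).

Definition eigenvalue_S (eps : R) (lam : C) : Prop :=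
  exists f, L2even f /\ ~ aeq f (fun=> 0) /\ is_S eps f (fun x => lam * f x).

Definition bounded_op (A : (R -> C) -> (R -> C) -> Prop) : Prop :=
  exists M : R, forall f h, A f h -> (l2norm2 h <= M%:E * l2norm2 f)%E.

End L2defs.

(* Main.v *)
Require Import Defs.
From HB Require Import structures.
From mathcomp Require Import all_boot all_order all_algebra.
From mathcomp Require Import all_classical all_reals all_analysis.
From mathcomp Require Import complex ring lra.
From mathcomp Require Import measurable_realfun normal_distribution zify.
Import Order.TTheory GRing.Theory Num.Theory.
Import numFieldNormedType.Exports.
Local Open Scope classical_set_scope.
Local Open Scope ring_scope.
Local Open Scope complex_scope.
Section S.
Variable R : realType.
Local Notation mu := (@lebesgue_measure R).
Local Notation C := (R[i]).

Lemma ftcR (F f : R -> R) (a b : R) : a <= b ->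
  (forall x : R, is_derive x (1:R) F (f x)) -> continuous f ->
  Rintegral mu `[a, b] f = F b - F a.
Proof.
move=> ab dF cf; case: (eqVneq a b) => [<-|nab].
  by rewrite set_itv1 Rintegral_set1 subrr.
have ltab : a < b by rewrite lt_neqAle nab.
have cF : continuous F.
  move=> x; apply: differentiable_continuous; apply/derivable1_diffP.
  by have [] := dF x.
rewrite /Rintegral (@continuous_FTC2 R f F a b ltab) //.
- exact: continuous_subspaceT.
- split.
  + by move=> x _; have [] := dF x.
  + exact/cvg_at_right_filter/cF.
  + exact/cvg_at_left_filter/cF.
- by move=> x _; rewrite derive1E; have [_ ->] := dF x.
Qed.

Lemma der_cont (F f : R -> R) : (forall x : R, is_derive x (1:R) F (f x)) -> continuous F.
Proof.
move=> dF x; apply: differentiable_continuous; apply/derivable1_diffP.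
by have [] := dF x.
Qed.

Definition ge (b y : R) := expR (b * (y * y)).

Lemma ge_derive (b x : R) : is_derive x (1:R) (ge b) (2 * b * x * ge b x).
Proof.
have h1 : is_derive x (1:R) (fun y : R => b * (y * y)) (b * (x + x)).
  have -> : (fun y : R => b * (y * y)) = b \*: ((@id R) * (@id R)).
    by apply/funext => y.
  apply: is_derive_eq.
  by rewrite !scaler1.
have -> : ge b = expR \o (fun y : R => b * (y * y)) by [].
apply: is_derive_eq.
rewrite /ge /=; ring.
Qed.

Definition wf (b y : R) := y * ge b y.

Lemma wf_derive (b x : R) : is_derive x (1:R) (wf b) (ge b x + x * (2 * b * x * ge b x)).
Proof.
have -> : wf b = (@id R) * ge b by apply/funext.
have := ge_derive b x => H.
apply: is_derive_eq.
by rewrite /= scaler1 /GRing.scale /=; ring.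
Qed.

Lemma ge_cont b : continuous (ge b).
Proof. by apply: (@der_cont _ (fun x => 2 * b * x * ge b x)) => x; exact: ge_derive. Qed.

Lemma wf_cont b : continuous (wf b).
Proof. by apply: (@der_cont _ (fun x => ge b x + x * (2 * b * x * ge b x))) => x; exact: wf_derive. Qed.

Lemma ge_gt0 b x : 0 < ge b x. Proof. exact: expR_gt0. Qed.

Lemma meas_ge b : measurable_fun setT (ge b).
Proof. exact: continuous_measurable_fun (ge_cont b). Qed.

Lemma meas_wf b : measurable_fun setT (wf b).
Proof. exact: continuous_measurable_fun (wf_cont b). Qed.

Lemma gauss_int (b : R) : 0 < b ->
  exists2 K : R, 0 < K & (\int[mu]_x (ge (- b) x)%:E)%E = K%:E.
Proof.
move=> b0.
set s := Num.sqrt ((b *+ 2)^-1).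
have s0 : s != 0.
  by rewrite gt_eqF // sqrtr_gt0 invr_gt0 pmulrn_lgt0.
have E : forall x, ge (-b) x = (normal_peak s)^-1 * normal_pdf 0 s x.
  move=> x; rewrite /normal_pdf (negbTE s0) /= mulrA mulVf ?gt_eqF ?normal_peak_gt0 // mul1r.
  rewrite /normal_fun /ge subr0 sqr_sqrtr; last by rewrite invr_ge0 mulrn_wge0 // ltW.
  congr expR; rewrite -mulr_natr; field.
  by rewrite gt_eqF.
exists (normal_peak s)^-1; first by rewrite invr_gt0 normal_peak_gt0.
under eq_integral do rewrite E EFinM.
rewrite ge0_integralZl_EFin //=.
- by rewrite integral_normal_pdf mule1.
- by move=> x _; rewrite lee_fin normal_pdf_ge0.
- by apply/measurable_EFinP; exact: measurable_normal_pdf.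
- by rewrite invr_ge0 normal_peak_ge0.
Qed.

Lemma cnorm2M (z w : C) : cnorm2 (z * w) = cnorm2 z * cnorm2 w.
Proof. case: z => a b; case: w => c d; rewrite /cnorm2; simpc => /=. ring. Qed.

Lemma cnorm2_ge0 (z : C) : 0 <= cnorm2 z.
Proof. by rewrite /cnorm2 addr_ge0 // sqr_ge0. Qed.

Lemma cnorm2_realC (r : R) : cnorm2 r%:C = r * r.
Proof. by rewrite /cnorm2 /= expr2 expr0n /= addr0. Qed.

Lemma mulC_realC (k : C) (v : R) : k * v%:C = (complex.Re k * v) +i* (complex.Im k * v).
Proof. case: k => a b /=. simpc. rewrite /=. congr (_ +i* _); ring. Qed.

Lemma cmeas_realC (u : R -> R) : measurable_fun setT u -> cmeasurable (fun x => (u x)%:C).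
Proof. by move=> mu'; split => //=. Qed.

Lemma cmeasZ (k : C) (f : R -> C) : cmeasurable f -> cmeasurable (fun x => k * f x).
Proof.
case=> mr mi; split.
- have -> : (fun x => complex.Re (k * f x)) =
     (fun x => complex.Re k * complex.Re (f x) - complex.Im k * complex.Im (f x)).
    by apply/funext => x; case: k; case: (f x) => ? ? ? ? /=.
  by apply: measurable_funB; apply: measurable_funM.
- have -> : (fun x => complex.Im (k * f x)) =
     (fun x => complex.Re k * complex.Im (f x) + complex.Im k * complex.Re (f x)).
    by apply/funext => x; case: k; case: (f x) => ? ? ? ? /=.
  by apply: measurable_funD; apply: measurable_funM.
Qed.

Lemma meas_cnorm2 (f : R -> C) : cmeasurable f -> measurable_fun setT (fun x => cnorm2 (f x)).
Proof.
case=> mr mi; rewrite /cnorm2.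
by apply: measurable_funD; apply: measurable_funX.
Qed.

Lemma l2norm2Z (k : C) (f : R -> C) : cmeasurable f ->
  l2norm2 (fun x => k * f x) = ((cnorm2 k)%:E * l2norm2 f)%E.
Proof.
move=> mf; rewrite /l2norm2.
under eq_integral do rewrite cnorm2M EFinM.
rewrite ge0_integralZl_EFin //.
- by move=> x _; rewrite lee_fin cnorm2_ge0.
- by apply/measurable_EFinP; exact: meas_cnorm2.
- exact: cnorm2_ge0.
Qed.

Lemma l2norm2_ge0 (f : R -> C) : (0 <= l2norm2 f)%E.
Proof. by apply: integral_ge0 => x _; rewrite lee_fin cnorm2_ge0. Qed.

Lemma L2Z (k : C) (f : R -> C) : L2 f -> L2 (fun x => k * f x).
Proof.
case=> mf fin; split; first exact: cmeasZ.
rewrite l2norm2Z //.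
have : l2norm2 f \is a fin_num by rewrite ge0_fin_numE // l2norm2_ge0.
by move=> /fineK <-; rewrite -EFinM ltry.
Qed.

Lemma gege b y : ge b y * ge b y = ge (b + b) y.
Proof. by rewrite /ge -expRD; congr expR; ring. Qed.

Lemma L2_ge c : 0 < c -> L2 (fun y => (ge (- c) y)%:C).
Proof.
move=> c0; split; first by apply: cmeas_realC; exact: meas_ge.
rewrite /l2norm2.
under eq_integral do rewrite cnorm2_realC gege -opprD.
have [K _ ->] := @gauss_int (c + c) (addr_gt0 c0 c0).
exact: ltry.
Qed.

Lemma wf_bound c y : 0 < c -> wf (- c) y * wf (- c) y <= c^-1 * ge (- c) y.
Proof.
move=> c0; rewrite /wf.
have e1 : c * (y * y) * ge (- c) y <= 1.
  have := expR_ge1Dx (c * (y * y)) => h.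
  have h2 : c * (y * y) <= expR (c * (y * y)) by lra.
  rewrite /ge mulNr.
  have := expR_gt0 (- (c * (y * y))) => hp.
  have := expRxMexpNx_1 (c * (y * y)) => h3.
  by apply: le_trans (ler_wpM2r (ltW hp) h2) _; rewrite h3.
have -> : y * ge (- c) y * (y * ge (- c) y) = (y * y * ge (- c) y) * ge (- c) y by ring.
apply: ler_wpM2r; first exact/ltW/ge_gt0.
by rewrite -(ler_pM2l c0) divff ?gt_eqF // mulrA.
Qed.

Lemma L2_wf c : 0 < c -> L2 (fun y => (wf (- c) y)%:C).
Proof.
move=> c0; split; first by apply: cmeas_realC; exact: meas_wf.
rewrite /l2norm2.
under eq_integral do rewrite cnorm2_realC.
have [K _ hK] := @gauss_int c c0.
apply: (@le_lt_trans _ _ (\int[mu]_x ((c^-1)%:E * (ge (- c) x)%:E))%E).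
  apply: ge0_le_integral => //.
  - by move=> x _; rewrite lee_fin -expr2 sqr_ge0.
  - by apply/measurable_EFinP; apply: measurable_funM; exact: meas_wf.
  - by apply/measurable_EFinP; apply: measurable_funM => //; exact: meas_ge.
  - by move=> x _; rewrite -EFinM lee_fin wf_bound.
rewrite ge0_integralZl_EFin //.
- by rewrite hK -EFinM ltry.
- by move=> x _; rewrite lee_fin ltW // ge_gt0.
- by apply/measurable_EFinP; exact: meas_ge.
- by rewrite invr_ge0 ltW.
Qed.
Lemma ftcZ (k : R) (w W : R -> R) (a b : R) : a <= b ->
  (forall x : R, is_derive x (1:R) W (w x)) -> continuous w ->
  Rintegral mu `[a, b] (fun y => k * w y) = k * (W b - W a).
Proof.
move=> ab dW cw.
have dF : forall x : R, is_derive x (1:R) (fun y => k * W y) (k * w x).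
  by move=> x; have := dW x => H; exact: (is_deriveZ k H).
have cf : continuous (fun y => k * w y).
  by move=> x; apply: cvgM; [exact: cvg_cst | exact: cw].
by rewrite (@ftcR (fun y => k * W y) (fun y => k * w y) a b ab dF cf) mulrBr.
Qed.

Lemma cprim_lin (K : C) (w W : R -> R) : (forall x : R, is_derive x (1:R) W (w x)) ->
  continuous w ->
  forall x, cprim (fun y => K * (w y)%:C) x = K * (W x - W 0)%:C.
Proof.
move=> dW cw x; rewrite /cprim.
have E1 : (fun y => complex.Re (K * (w y)%:C)) = (fun y => complex.Re K * w y).
  by apply/funext => y; rewrite mulC_realC.
have E2 : (fun y => complex.Im (K * (w y)%:C)) = (fun y => complex.Im K * w y).
  by apply/funext => y; rewrite mulC_realC.
rewrite E1 E2 mulC_realC; case: ifPn => x0.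
  by rewrite !(@ftcZ _ w W).
have x0' : x <= 0 by rewrite ltW // ltNge.
rewrite !(@ftcZ _ w W) //.
simpc; congr (_ +i* _); ring.
Qed.
Definition Fk (a : R) (k : C) := fun y => k * (ge (- (a / 2)) y)%:C.
Definition Gk (a : R) (k : C) := fun y => (k * (a%:C * 'i)) * (wf (- (a / 2)) y)%:C.

Lemma ge0E b : ge b 0 = 1.
Proof. by rewrite /ge mul0r mulr0 expR0. Qed.

Lemma is_p_F a k : 0 < a -> is_p (Fk a k) (Gk a k).
Proof.
move=> a0; have a20 : 0 < a / 2 by rewrite divr_gt0.
split; first exact/L2Z/L2_ge.
split; first exact/L2Z/L2_wf.
exists k; apply: aeW => x.
have dW : forall x : R, is_derive x (1:R) (fun y => - a^-1 * ge (- (a / 2)) y) (wf (- (a / 2)) x).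
  move=> y; have := ge_derive (- (a / 2)) y => H.
  have -> : (fun y => - a^-1 * ge (- (a / 2)) y) = (- a^-1) \*: ge (- (a / 2)) by apply/funext.
  apply: is_derive_eq.
  rewrite /wf /GRing.scale /=; field; by rewrite gt_eqF.
rewrite /Gk (@cprim_lin _ (wf (- (a / 2))) _ dW (@wf_cont _)) ge0E /Fk.
case: k => k1 k2; simpc; rewrite /=; simpc; congr (_ +i* _); field; by rewrite gt_eqF.
Qed.

Lemma is_t_F a k : 0 < a -> is_t (Fk a k) (fun x => (a%:C * 'i) * Fk a k x).
Proof.
move=> a0; have a20 : 0 < a / 2 by rewrite divr_gt0.
exists (Gk a k); split; first exact: is_p_F.
split; first exact/L2Z/L2_wf.
split; first by apply: L2Z; exact/L2Z/L2_ge.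
apply: aeW => x; rewrite /Gk /Fk /wf.
case: k => k1 k2; simpc; rewrite /=; simpc; congr (_ +i* _); ring.
Qed.
Lemma not_ae0 (f : R -> C) : (forall x, f x != 0) -> ~ aeq f (fun=> 0).
Proof.
move=> nz Hae.
have muT : (0 < mu [set: R])%E.
  apply: (@lt_le_trans _ _ (mu `[0%R, 1%R])).
    rewrite lebesgue_measure_itv /= lte01 oppr0 adde0 lte_fin ltr01 //.
  by apply: le_measure => //; rewrite inE.
have [x /eqP] := @filter_ex _ _ (ae_properfilter_algebraOfSetsType muT) _ Hae.
by rewrite (negbTE (nz x)).
Qed.

Lemma Fk_neq0 a k x : k != 0 -> Fk a k x != 0.
Proof.
move=> k0; rewrite /Fk mulf_eq0 negb_or k0 /=.
by rewrite (inj_eq (@complexI _)) gt_eqF // ge_gt0.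
Qed.

Lemma tpow_F a n k : 0 < a ->
  is_tpow n (Fk a k) (fun x => (a%:C * 'i) ^+ n * Fk a k x).
Proof.
move=> a0; have a20 : 0 < a / 2 by rewrite divr_gt0.
elim: n k => [|n IH] k /=.
  split; first exact/L2Z/L2_ge.
  by apply: aeW => x; rewrite expr0 mul1r.
exists (fun x => (a%:C * 'i) * Fk a k x); split; first exact: is_t_F.
have E1 : (fun x => (a%:C * 'i) * Fk a k x) = Fk a ((a%:C * 'i) * k).
  by apply/funext => x; rewrite /Fk mulrA.
have E2 : (fun x => (a%:C * 'i) ^+ n.+1 * Fk a k x) =
          (fun x => (a%:C * 'i) ^+ n * Fk a ((a%:C * 'i) * k) x).
  by apply/funext => x; rewrite /Fk exprSr !mulrA.
rewrite E1 E2; exact: IH.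
Qed.

Lemma Fk_even a k : aeq (Fk a k) (fun x => Fk a k (- x)).
Proof. by apply: aeW => x; rewrite /Fk /ge mulrNN. Qed.

Lemma eig_t (s : R) : 0 < s -> eigenvalue_t (s%:C * 'i).
Proof.
move=> s0; exists (Fk s 1); split; first exact/L2Z/L2_ge/divr_gt0.
split; first by apply: not_ae0 => x; apply: Fk_neq0; exact: oner_neq0.
exact: is_t_F.
Qed.
Definition Lfun (x : R) := (ln (1 + x) - ln (1 - x)) / 2.
Definition Pf (N : nat) (x : R) := \sum_(n < N) x ^+ (n.*2.+1) / (n.*2.+1)%:R.
Definition Df (N : nat) (x : R) := Pf N x - Lfun x.

Lemma Lfun_derive (x : R) : -1 < x < 1 -> is_derive x (1:R) Lfun ((1 - x ^+ 2)^-1).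
Proof.
case/andP=> h1 h2.
have p1 : 0 < 1 + x by lra.
have p2 : 0 < 1 - x by lra.
have d1 : is_derive x (1:R) ((@ln R) \o (fun y : R => 1 + y)) ((1 + x)^-1 * 1).
  have g1 : is_derive x (1:R) (fun y : R => 1 + y) 1.
    apply: is_derive_eq. by rewrite add0r mulr1.
  have l1 := is_derive1_ln p1.
  exact: (is_derive1_comp l1 g1).
have d2 : is_derive x (1:R) ((@ln R) \o (fun y : R => 1 - y)) ((1 - x)^-1 * -1).
  have g1 : is_derive x (1:R) (fun y : R => 1 - y) (-1).
    apply: is_derive_eq. by rewrite add0r mul1r.
  have l1 := is_derive1_ln p2.
  exact: (@is_derive1_comp R (@ln R) (fun y : R => 1 - y) x _ _ l1 g1).
have -> : Lfun = (2^-1 : R) \*: (((@ln R) \o (fun y : R => 1 + y)) - ((@ln R) \o (fun y : R => 1 - y))).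
  by apply/funext => y; rewrite /Lfun /= mulrC.
apply: is_derive_eq.
rewrite /GRing.scale /=; field.
apply/and3P; split; rewrite ?gt_eqF //.
have -> : 1 - x ^+ 2 = (1 + x) * (1 - x) by ring.
by rewrite mulr_gt0.
Qed.
Lemma pow_derive m (x : R) : is_derive x (1:R) (fun y : R => y ^+ m) (m%:R * x ^+ m.-1).
Proof.
apply: DeriveDef; first exact: exprn_derivable.
by rewrite exp_derive /GRing.scale /= mulr1.
Qed.

Lemma term_derive m (k x : R) :
  is_derive x (1:R) (fun y : R => y ^+ m / k) (k^-1 * (m%:R * x ^+ m.-1)).
Proof.
have H := pow_derive m x.
have -> : (fun y : R => y ^+ m / k) = k^-1 \*: (fun y : R => y ^+ m).
  by apply/funext => y; rewrite /= mulrC.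
exact: is_deriveZ.
Qed.

Lemma Df_derive N (x : R) : -1 < x < 1 ->
  is_derive x (1:R) (Df N) (- x ^+ (N.*2) / (1 - x ^+ 2)).
Proof.
move=> hx; have hx2 : 1 - x ^+ 2 != 0.
  case/andP: hx => h1 h2; rewrite gt_eqF //.
  have -> : 1 - x ^+ 2 = (1 + x) * (1 - x) by ring.
  by rewrite mulr_gt0 //; lra.
elim: N => [|N IH].
  have -> : Df 0 = - Lfun by apply/funext => y; rewrite /Df /Pf big_ord0 sub0r.
  have := @Lfun_derive x hx => H.
  apply: is_derive_eq.
  by rewrite double0 expr0 mulNr mul1r.
have -> : Df N.+1 = Df N + (fun y : R => y ^+ (N.*2.+1) / (N.*2.+1)%:R).
  by apply/funext => y; rewrite /Df /Pf big_ord_recr /= fctE; ring.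
have := term_derive (N.*2.+1) (N.*2.+1)%:R x => H.
apply: is_derive_eq.
rewrite /= doubleS !exprS; field.
have -> : 1 + (N.*2)%:R = (N.*2.+1)%:R :> R by rewrite -natr1 addrC.
by rewrite -expr2 hx2 /= pnatr_eq0.
Qed.
Lemma Df0 N : Df N 0 = 0.
Proof.
rewrite /Df /Pf /Lfun big1 ?addr0 ?subr0 ?subrr ?mul0r ?subr0 //.
by move=> i _; rewrite expr0n /= mul0r.
Qed.

Lemma Df_bound N (r : R) : 0 <= r < 1 ->
  `|Df N r| <= r ^+ (N.*2) / (1 - r ^+ 2) * r.
Proof.
case/andP=> r0 r1.
have r2 : 0 < 1 - r ^+ 2.
  have -> : 1 - r ^+ 2 = (1 + r) * (1 - r) by ring.
  by rewrite mulr_gt0 //; lra.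
case: (eqVneq r 0) => [->|rn0].
  by rewrite Df0 normr0 mulr0.
have rp : 0 < r by rewrite lt_neqAle eq_sym rn0.
have dD : forall x, x \in `]0, r[ -> is_derive x (1:R) (Df N) (- x ^+ (N.*2) / (1 - x ^+ 2)).
  move=> x; rewrite in_itv /= => /andP[h1 h2]; apply: Df_derive; lra.
have cD : {within `[0, r], continuous (Df N)}.
  apply: derivable_within_continuous => x; rewrite in_itv /= => /andP[h1 h2].
  have hx : -1 < x < 1 by apply/andP; split; lra.
  by have [] := @Df_derive N x hx.
have [xi] := MVT rp dD cD.
rewrite in_itv /= => /andP[x0 x1].
rewrite Df0 subr0 subr0 => ->.
have xi2 : 0 < 1 - xi ^+ 2.
  have -> : 1 - xi ^+ 2 = (1 + xi) * (1 - xi) by ring.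
  by rewrite mulr_gt0 //; lra.
rewrite normrM mulNr normrN (ger0_norm (ltW rp)) ler_wpM2r //. 
rewrite ger0_norm; last by rewrite divr_ge0 // ?exprn_ge0 ?ltW.
apply: ler_pM.
- by rewrite exprn_ge0 // ltW.
- by rewrite invr_ge0 ltW.
- by rewrite lerXn2r // ?nnegrE ltW.
- rewrite lef_pV2 ?posrE //.
  have : xi ^+ 2 <= r ^+ 2 by rewrite lerXn2r // ?nnegrE ltW.
  lra.
Qed.
Lemma Pf_cvg_sq (r K : R) : 0 <= r < 1 -> 0 <= K ->
  (fun N => (Pf N.+1 r - Lfun r) * (Pf N.+1 r - Lfun r) * K) @ \oo --> (0:R).
Proof.
move=> /andP[r0 r1] K0.
have r2 : 0 < 1 - r ^+ 2.
  have -> : 1 - r ^+ 2 = (1 + r) * (1 - r) by ring.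
  by rewrite mulr_gt0 //; lra.
set D := (1 - r ^+ 2)^-1.
have D0 : 0 <= D by rewrite invr_ge0 ltW.
have bnd : forall N, `|Pf N.+1 r - Lfun r| <= r ^+ N * D.
  move=> N; have := @Df_bound N.+1 r; rewrite r0 r1 /= => /(_ isT) h.
  apply: (le_trans h); rewrite /Df -/D.
  have -> : r ^+ (N.+1).*2 / (1 - r ^+ 2) * r = r ^+ ((N.+1).*2.+1) * D.
    by rewrite /D (exprSr r ((N.+1).*2)) mulrAC.
  apply: ler_wpM2r => //; apply: ler_wiXn2l => //; first exact: ltW.
  by rewrite doubleS; lia.
apply: (@squeeze_cvgr _ _ _ _ (fun=> 0) (fun N => (r ^+ 2) ^+ N * (D * D * K))).
- near=> N; apply/andP; split.
    by rewrite mulr_ge0 // -expr2 sqr_ge0.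
  rewrite [leRHS]mulrA; apply: ler_wpM2r => //.
  have h := bnd N.
  apply: (le_trans (ler_norm _)); rewrite normrM.
  have -> : (r ^+ 2) ^+ N * (D * D) = (r ^+ N * D) * (r ^+ N * D).
    by rewrite -exprM mulnC exprM expr2; ring.
  by apply: ler_pM.
- exact: cvg_cst.
- have -> : (0:R) = 0 * (D * D * K) by rewrite mul0r.
  apply: cvgMl; apply: cvg_expr.
  rewrite ger0_norm ?exprn_ge0 //.
  rewrite expr2; apply: (le_lt_trans _ r1).
  by rewrite -[leRHS](mulr1 r) ler_wpM2l // ltW.
Unshelve. all: by end_near.
Qed.
Lemma lam_pow (a : R) n : (a%:C * 'i) ^+ (n.*2.+1) = ((-1) ^+ n * a ^+ (n.*2.+1))%:C * 'i :> C.
Proof.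
elim: n => [|n IH]; first by rewrite expr1 expr0 mul1r expr1.
rewrite doubleS (exprSr _ n.*2.+2) (exprSr _ n.*2.+1) IH.
rewrite !exprSr; simpc; rewrite /=; simpc; congr (_ +i* _); ring.
Qed.

Lemma term_eq (eps a : R) n :
  (Scoef eps n)%:C * (a%:C * 'i) ^+ (n.*2.+1) =
  (((Num.sqrt eps * a) ^+ (n.*2.+1)) / (n.*2.+1)%:R)%:C * 'i :> C.
Proof.
rewrite lam_pow mulrA -rmorphM; congr (_%:C * _).
rewrite /Scoef exprMn.
have h : (-1) ^+ n * (-1) ^+ n = 1 :> R by rewrite -exprMn mulrNN mulr1 expr1n.
have -> : (-1) ^+ n / (n.*2.+1)%:R * Num.sqrt eps ^+ n.*2.+1 * ((-1) ^+ n * a ^+ n.*2.+1)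
  = ((-1) ^+ n * (-1) ^+ n) * (Num.sqrt eps ^+ n.*2.+1 * a ^+ n.*2.+1 / (n.*2.+1)%:R) by ring.
by rewrite h mul1r.
Qed.

Lemma cnorm2_i : cnorm2 ('i : C) = 1.
Proof. by rewrite /cnorm2 /= expr0n /= expr1n add0r. Qed.

Lemma l2norm2_Fk1 a : 0 < a -> exists2 K : R, 0 < K & l2norm2 (Fk a 1) = K%:E.
Proof.
move=> a0.
have [K K0 hK] := @gauss_int a a0.
exists K => //; rewrite /l2norm2.
under eq_integral do rewrite /Fk mul1r cnorm2_realC gege.
have -> : - (a / 2) + - (a / 2) = - a by field.
exact: hK.
Qed.

Lemma cmeas_Fk a k : cmeasurable (Fk a k).
Proof. by apply: cmeasZ; apply: cmeas_realC; exact: meas_ge. Qed.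

Lemma is_S_F (eps s : R) : 0 < eps -> 0 < s ->
  exists2 a : R, 0 < a & is_S eps (Fk a 1) (fun x => - (s%:C * 'i) * Fk a 1 x).
Proof.
move=> e0 s0.
set se := Num.sqrt eps.
have se0 : 0 < se by rewrite sqrtr_gt0.
set c := se * s.
have c0 : 0 < c by rewrite mulr_gt0.
set E := expR (c + c).
have E1 : 1 < E by rewrite expR_gt1 addr_gt0.
set r := (E - 1) / (E + 1).
have Ep : 0 < E + 1 by lra.
have r0 : 0 < r by rewrite divr_gt0 //; lra.
have r1 : r < 1 by rewrite ltr_pdivrMr //; lra.
have Lr : Lfun r = c.
  have h1 : 0 < 1 - r by lra.
  rewrite /Lfun.
  have -> : 1 + r = E * (1 - r).
    by rewrite /r; field; rewrite gt_eqF.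
  rewrite (@lnM R E (1 - r)); first last.
  - by rewrite posrE.
  - by rewrite posrE expR_gt0.
  rewrite addrK expRK; lra.
set a := r / se.
have a0 : 0 < a by rewrite divr_gt0.
have sea : se * a = r by rewrite /a mulrC divfK // gt_eqF.
exists a => //.
have a20 : 0 < a / 2 by rewrite divr_gt0.
have L2F : L2 (Fk a 1) by apply: L2Z; exact: L2_ge.
split; first by split => //; exact: Fk_even.
exists (fun n => fun x => (a%:C * 'i) ^+ (n.*2.+1) * Fk a 1 x).
split; first by move=> n; exact: tpow_F.
exists (fun x => (c%:C * 'i) * Fk a 1 x).
split; first exact: L2Z.
split.
  have [K K0 hK] := @l2norm2_Fk1 a a0.
  rewrite /L2cvg.
  have EE : (fun N => l2norm2 (fun x => \sum_(n < N.+1) (Scoef eps n)%:C *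
          ((a%:C * 'i) ^+ (n.*2.+1) * Fk a 1 x) - (c%:C * 'i) * Fk a 1 x)) =
          (fun N => ((Pf N.+1 r - Lfun r) * (Pf N.+1 r - Lfun r) * K)%:E).
    apply/funext => N.
    have -> : (fun x => \sum_(n < N.+1) (Scoef eps n)%:C *
          ((a%:C * 'i) ^+ (n.*2.+1) * Fk a 1 x) - (c%:C * 'i) * Fk a 1 x) =
          (fun x => ((Pf N.+1 r - c)%:C * 'i) * Fk a 1 x).
      apply/funext => x.
      under eq_bigr do rewrite mulrA term_eq sea.
      rewrite -mulr_suml -mulr_suml -rmorph_sum /Pf rmorphB; ring.
    rewrite l2norm2Z; last exact: cmeas_Fk.
    by rewrite hK cnorm2M cnorm2_i mulr1 cnorm2_realC -EFinM Lr.
  rewrite EE; apply: cvg_EFin; first by near=> N.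
  have -> : (fine \o (fun N => ((Pf N.+1 r - Lfun r) * (Pf N.+1 r - Lfun r) * K)%:E)) =
            (fun N => (Pf N.+1 r - Lfun r) * (Pf N.+1 r - Lfun r) * K) by apply/funext.
  apply: Pf_cvg_sq; last exact: ltW.
  by rewrite r1 ltW.
apply: aeW => x.
rewrite /c rmorphM fmorphV; field.
by rewrite (inj_eq (@complexI _)) gt_eqF.
Unshelve. all: by end_near.
Qed.
Lemma cnorm2N (z : C) : cnorm2 (- z) = cnorm2 z.
Proof. by case: z => a b; rewrite /cnorm2 /= !sqrrN. Qed.

Lemma unb_helper (M s K : R) : s = `|M| + 1 -> 0 < K ->
  ((s * s)%:E * K%:E <= M%:E * K%:E)%E -> False.
Proof.
move=> -> K0; rewrite -!EFinM lee_fin ler_pM2r // => h.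
have hM : M <= `|M| := ler_norm M.
have hM0 : 0 <= `|M| := normr_ge0 M.
nra.
Qed.
Lemma main_thm (eps : R) (heps : 0 < eps <= 1) :
  (forall s : R, 0 < s -> eigenvalue_t (s%:C * 'i)) /\
  (forall s : R, 0 < s -> eigenvalue_S eps (- (s%:C * 'i))) /\
  ~ bounded_op (@is_t R) /\ ~ bounded_op (is_S eps).
Proof.
case/andP: heps => e0 _.
split; first exact: eig_t.
split.
  move=> s s0; have [a a0 H] := @is_S_F eps s e0 s0.
  exists (Fk a 1); split; first by case: H.
  split; first by apply: not_ae0 => x; apply: Fk_neq0; exact: oner_neq0.
  exact: H.
split.
  case=> M HM.
  set s := `|M| + 1.
  have s0 : 0 < s by rewrite /s ltr_wpDl.
  have := HM _ _ (@is_t_F s 1 s0).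
  rewrite l2norm2Z; last exact: cmeas_Fk.
  have [K K0 ->] := @l2norm2_Fk1 s s0.
  rewrite cnorm2M cnorm2_i mulr1 cnorm2_realC.
  exact: unb_helper.
case=> M HM.
set s := `|M| + 1.
have s0 : 0 < s by rewrite /s ltr_wpDl.
have [a a0 H] := @is_S_F eps s e0 s0.
have := HM _ _ H.
rewrite l2norm2Z; last exact: cmeas_Fk.
have [K K0 ->] := @l2norm2_Fk1 a a0.
rewrite cnorm2N cnorm2M cnorm2_i mulr1 cnorm2_realC.
exact: unb_helper.
Qed.
End S.

Theorem theorem3p3 (R : realType) (eps : R) (heps : 0 < eps <= 1) :
  (forall s : R, 0 < s -> eigenvalue_t (s%:C * 'i)) /\
  (forall s : R, 0 < s -> eigenvalue_S eps (- (s%:C * 'i))) /\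
  ~ bounded_op (@is_t R) /\ ~ bounded_op (is_S eps).
Proof. exact: (@main_thm R eps heps). Qed.
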